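(* Let $\mathbf{x}=(\mathbf{x}_1,\dots,\mathbf{x}_n)\in\mathbb{R}^{3n}$ be a ligand pose whose atom positions are not all collinear, and let $\boldsymbol{\theta}=(\theta_1,\dots,\theta_m)$ be fixed. For $t\in\mathbb{R}$ put $t\boldsymbol{\theta}=(t\theta_1,\dots,t\theta_m)$ and $\mathbf{x}(t):=A_{\mathrm{tor}}(t\boldsymbol{\theta},\mathbf{x})$, and assume $\mathbf{x}(0)=\mathbf{x}$ and that $t\mapsto\mathbf{x}(t)$ is differentiable at $t=0$ (with the aligning rotation and translation differentiable in $t$ at $t=0$). Then the linear and angular momentum of the motion vanish at $t=0$: $$\frac{d}{dt}\bar{\mathbf{x}}(t)\Big|_{t=0}=0\qquad\text{and}\qquad \sum_{i=1}^n(\mathbf{x}_i-\bar{\mathbf{x}})\times\frac{d}{dt}\mathbf{x}_i(t)\Big|_{t=0}=0,$$ where $\bar{\mathbf{x}}(t)=\frac1n\sum_i\mathbf{x}_i(t)$ and $\bar{\mathbf{x}}=\bar{\mathbf{x}}(0)$.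
   Context: A ligand pose is $\mathbf{x}\in\mathbb{R}^{3n}$, with $\mathbf{x}_i\in\mathbb{R}^3$ the position of atom $i$. $\mathrm{RMSD}(\mathbf{x},\mathbf{x}')=\big(\frac1n\sum_i\|\mathbf{x}_i-\mathbf{x}'_i\|^2\big)^{1/2}$. For $g\in SE(3)$ (proper rigid motion) $g\mathbf{x}'$ applies $g$ to every atom. Define $\mathrm{RMSDAlign}(\mathbf{x},\mathbf{x}')=\operatorname{argmin}_{\mathbf{x}^\dagger\in\{g\mathbf{x}'\mid g\in SE(3)\}}\mathrm{RMSD}(\mathbf{x},\mathbf{x}^\dagger)$. The ligand has $m$ rotatable bonds $(a_k,b_k)$; for each $k$ and angle $\theta$, $B_{k,\theta}:\mathbb{R}^{3n}\to\mathbb{R}^{3n}$ is a torsion update by $\theta$ around bond $k$ (rotation of the atoms on one side of the bond about the bond axis by $\theta$), with $B_{k,0}$ the identity and $B_{k,\theta}$ smooth in $\theta$. The torsion operation is $A_{\mathrm{tor}}(\boldsymbol{\theta},\mathbf{x})=\mathrm{RMSDAlign}\big(\mathbf{x},(B_{1,\theta_1}\circ\cdots\circ B_{m,\theta_m})(\mathbf{x})\big)$ for $\boldsymbol{\theta}\in SO(2)^m$. *)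

(* Defs.v *)
From HB Require Import structures.
From mathcomp Require Import all_boot all_order all_algebra.
From mathcomp Require Import all_classical all_reals all_analysis.
Set Implicit Arguments. Unset Strict Implicit. Unset Printing Implicit Defensive.
Import Order.TTheory GRing.Theory Num.Theory.
Import numFieldNormedType.Exports.
Local Open Scope ring_scope.

(* A pose of n atoms is an n x 3 real matrix; row i is the position x_i. *)
Section Defs.
Variable R : realType.

Definition dot3 (u v : 'rV[R]_3) : R := \sum_(j < 3) u 0 j * v 0 j.
Definition norm3 (u : 'rV[R]_3) : R := Num.sqrt (dot3 u u).

Definition cross (u v : 'rV[R]_3) : 'rV[R]_3 :=
  \row_(j < 3) [:: u 0 1 * v 0 2 - u 0 2 * v 0 1;
                  u 0 2 * v 0 0 - u 0 0 * v 0 2;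
                  u 0 0 * v 0 1 - u 0 1 * v 0 0]`_j.

Definition centroid n (x : 'M[R]_(n, 3)) : 'rV[R]_3 :=
  n%:R^-1 *: \sum_(i < n) row i x.

Definition collinear n (x : 'M[R]_(n, 3)) : Prop :=
  exists (c d : 'rV[R]_3), forall i : 'I_n, exists s : R, row i x = c + s *: d.

Definition RMSD n (x x' : 'M[R]_(n, 3)) : R :=
  Num.sqrt (n%:R^-1 * \sum_(i < n) \sum_(j < 3) (x i j - x' i j) ^+ 2).

Definition is_rot (Q : 'M[R]_3) : Prop := Q *m Q^T = 1%:M /\ \det Q = 1.

(* proper rigid motion g = (Q, p) applied atomwise: x_i |-> x_i Q + p
   (row-vector convention; Q ranges over all of SO(3)) *)
Definition rigid n (Q : 'M[R]_3) (p : 'rV[R]_3) (y : 'M[R]_(n, 3)) : 'M[R]_(n, 3) :=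
  y *m Q + \matrix_(i < n, j < 3) p 0 j.

Definition is_RMSDAlign n (x x' xd : 'M[R]_(n, 3)) : Prop :=
  (exists Q p, is_rot Q /\ xd = rigid Q p x') /\
  (forall Q p, is_rot Q -> RMSD x xd <= RMSD x (rigid Q p x')).

(* Rotation of the point v by angle th about the axis through c with
   direction w (Rodrigues' formula); identity if the axis is degenerate. *)
Definition axis_rot (c w : 'rV[R]_3) (th : R) (v : 'rV[R]_3) : 'rV[R]_3 :=
  if w == 0 then v else
  let u := (norm3 w)^-1 *: w in
  c + (cos th *: (v - c) + sin th *: cross u (v - c)
       + ((1 - cos th) * dot3 u (v - c)) *: u).

(* torsion update B_{k,th}: bond k = (a k, b k); the atoms of side k (the side
   containing b k) are rotated by th about the bond axis a k -> b k. *)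
Definition torsion n m (a b : 'I_m -> 'I_n) (side : 'I_m -> {set 'I_n})
    (k : 'I_m) (th : R) (y : 'M[R]_(n, 3)) : 'M[R]_(n, 3) :=
  \matrix_(i < n)
    (if i \in side k
     then axis_rot (row (b k) y) (row (b k) y - row (a k) y) th (row i y)
     else row i y).

Definition Btor n m (a b : 'I_m -> 'I_n) (side : 'I_m -> {set 'I_n})
    (th : 'I_m -> R) (y : 'M[R]_(n, 3)) : 'M[R]_(n, 3) :=
  foldr (fun k acc => torsion a b side k (th k) acc) y (enum 'I_m).

End Defs.

(* Main.v *)
Require Import Defs.
From HB Require Import structures.
From mathcomp Require Import all_boot all_order all_algebra.
From mathcomp Require Import all_classical all_reals all_analysis.
From mathcomp Require Import ring lra.
Import Order.TTheory GRing.Theory Num.Theory.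
Import numFieldNormedType.Exports.
Local Open Scope ring_scope.

Lemma sum3 (R : comNzRingType) (F : 'I_3 -> R) : \sum_(j < 3) F j = F 0 + F 1 + F 2.
Proof. rewrite !big_ord_recr big_ord0 /= add0r; congr (F _ + F _ + F _); exact/val_inj. Qed.
Lemma sum2 (R : comNzRingType) (F : 'I_2 -> R) : \sum_(j < 2) F j = F 0 + F 1.
Proof. rewrite !big_ord_recr big_ord0 /= add0r; congr (F _ + F _); exact/val_inj. Qed.
Lemma det3 (R : comNzRingType) (f : nat -> nat -> R) :
  \det (\matrix_(i < 3, j < 3) f i j) =
  f 0 0 * (f 1 1 * f 2 2 - f 1 2 * f 2 1)
  - f 0 1 * (f 1 0 * f 2 2 - f 1 2 * f 2 0)
  + f 0 2 * (f 1 0 * f 2 1 - f 1 1 * f 2 0).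
Proof.
rewrite (expand_det_row _ 0) sum3 /cofactor /=.
rewrite !(expand_det_row _ 0) !sum2 /cofactor /= !det_mx11 !mxE /=.
rewrite /bump !modn_small //=.
rewrite ?addn0 ?add0n ?addn1 ?add0n. ring.
Qed.

Definition prot (R : realType) (p q : nat) (c s : R) (i j : nat) : R :=
  if i == j then (if (i == p) || (i == q) then c else 1)
  else if (i == p) && (j == q) then s
  else if (i == q) && (j == p) then - s else 0.

Arguments prot {R}.
Definition PR (R : realType) p q (c s : R) : 'M[R]_3 := \matrix_(i < 3, j < 3) prot p q c s i j.

Arguments PR {R}.
Lemma PR_rot (R : realType) p q (c s : R) :
  (p, q) = (0, 1)%N \/ (p, q) = (1, 2)%N \/ (p, q) = (2, 0)%N ->
  c ^+ 2 + s ^+ 2 = 1 -> is_rot (PR p q c s).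
Proof.
move=> hpq hcs; split; last first.
  rewrite /PR det3 /prot.
  by case: hpq => [[-> ->]|[[-> ->]|[-> ->]]] /=; first [ring | apply: (etrans _ hcs); ring].
apply/matrixP => i j; rewrite !mxE sum3 !mxE /prot.
case: i j => [[|[|[|i]]] Hi] [[|[|[|j]]] Hj] //=;
 by case: hpq => [[-> ->]|[[-> ->]|[-> ->]]] /=; first [ring | apply: (etrans _ hcs); ring].
Qed.

Lemma circle (R : realType) (A C : R) :
  (forall c s : R, c ^+ 2 + s ^+ 2 = 1 -> 0 <= (1 - c) * A - s * C) -> C = 0.
Proof.
move=> H.
have hk0 : A ^+ 2 + 1 != 0 by apply/lt0r_neq0; have := sqr_ge0 A; lra.
set k := (A ^+ 2 + 1)^-1.
have kp : 0 < k by rewrite invr_gt0; have := sqr_ge0 A; lra.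
set u := C * k.
have hd0 : 1 + u ^+ 2 != 0 by apply/lt0r_neq0; have := sqr_ge0 u; lra.
have dp : 0 < 1 + u ^+ 2 by have := sqr_ge0 u; lra.
have hcs : ((1 - u ^+ 2) / (1 + u ^+ 2)) ^+ 2 + (2 * u / (1 + u ^+ 2)) ^+ 2 = 1.
  by field.
have := H _ _ hcs.
have -> : (1 - (1 - u ^+ 2) / (1 + u ^+ 2)) * A - 2 * u / (1 + u ^+ 2) * C
   = (2 * (C ^+ 2 * k ^+ 2 * (A - A ^+ 2 - 1))) / (1 + u ^+ 2).
  rewrite /u /k; field; rewrite hk0 /=; apply/lt0r_neq0; have := sqr_ge0 C; have := sqr_ge0 (A ^+ 2 + 1); nra.
rewrite pmulr_lge0 ?invr_gt0 // pmulr_rge0 // => hX.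
have hA : A - A ^+ 2 - 1 < 0 by nra.
have hC2 : 0 <= C ^+ 2 * k ^+ 2 by apply: mulr_ge0; apply: sqr_ge0.
have : C ^+ 2 * k ^+ 2 = 0 by nra.
move/eqP; rewrite mulf_eq0 !sqrf_eq0 => /orP[/eqP //|]; by rewrite gt_eqF.
Qed.

Section Main.
Variables (R : realType) (n : nat) (x : 'M[R]_(n, 3)).

Definition Ex (z : 'M[R]_(n, 3)) := \sum_(i < n) \sum_(j < 3) (x i j - z i j) ^+ 2.

Lemma Ex_ge0 z : 0 <= Ex z.
Proof. by apply: sumr_ge0 => i _; apply: sumr_ge0 => j _; apply: sqr_ge0. Qed.

Lemma rmsd_E z w : RMSD x z <= RMSD x w -> Ex z <= Ex w.
Proof.
rewrite /RMSD ler_sqrt; last by apply: mulr_ge0; [rewrite invr_ge0 ler0n | exact: Ex_ge0].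
case: (posnP n) => [n0 _|n0].
  rewrite /Ex !big1 // => i; have := ltn_ord i; by rewrite {2}n0.
by rewrite ler_pM2l // invr_gt0 ltr0n.
Qed.

Lemma rigid_comp Q p Q' p' (y : 'M[R]_(n, 3)) :
  rigid Q' p' (rigid Q p y) = rigid (Q *m Q') (p *m Q' + p') y.
Proof.
rewrite /rigid mulmxDl mulmxA -addrA; congr (_ + _); apply/matrixP => i j.
rewrite !mxE; congr (_ + _); apply: eq_bigr => k _; by rewrite mxE.
Qed.

Lemma is_rot_mul (A B : 'M[R]_3) : is_rot A -> is_rot B -> is_rot (A *m B).
Proof.
move=> [hA dA] [hB dB]; split; last by rewrite det_mulmx dA dB mulr1.
by rewrite trmx_mul mulmxA -(mulmxA A) hB mulmx1 hA.
Qed.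

Lemma trans_opt (y : 'M[R]_(n, 3)) :
  (forall p, Ex y <= Ex (rigid 1%:M p y)) -> forall j, \sum_i (x i j - y i j) = 0.
Proof.
move=> H.
case: (posnP n) => [n0|n0].
  move=> j; rewrite big1 // => i; have := ltn_ord i; by rewrite {2}n0.
set D := fun j => \sum_i (x i j - y i j).
have key : forall p : 'rV[R]_3, Ex (rigid 1%:M p y) - Ex y =
   \sum_(j < 3) (n%:R * p 0 j ^+ 2 - 2 * p 0 j * D j).
  move=> p; rewrite /Ex -sumrB.
  under eq_bigr => i _ do rewrite -sumrB.
  rewrite exchange_big /=; apply: eq_bigr => j _.
  under eq_bigr => i _ do rewrite /rigid mulmx1 !mxE.
  rewrite /D mulr_sumr.
  have -> : n%:R * p 0 j ^+ 2 = \sum_(i < n) p 0 j ^+ 2.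
    by rewrite sumr_const card_ord mulr_natl.
  rewrite -sumrB; apply: eq_bigr => i _; ring.
have := H (\row_j (n%:R^-1 * D j)); rewrite -subr_ge0 key sum3 !mxE.
have nn : n%:R != 0 :> R by rewrite pnatr_eq0 -lt0n.
have np : 0 < n%:R^-1 :> R by rewrite invr_gt0 ltr0n.
set k := n%:R^-1.
have e : forall d : R, n%:R * (k * d) ^+ 2 - 2 * (k * d) * d = - (k * d ^+ 2).
  move=> d; rewrite /k; field; done.
rewrite !e -!opprD oppr_ge0 -!mulrDr pmulr_rle0 // => h.
have h0 := sqr_ge0 (D 0); have h1 := sqr_ge0 (D 1); have h2 := sqr_ge0 (D 2).
have z0 : D 0 ^+ 2 = 0 by lra.
have z1 : D 1 ^+ 2 = 0 by lra.
have z2 : D 2 ^+ 2 = 0 by lra.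
move=> j; rewrite -/(D j).
have : D j ^+ 2 = 0.
  case: j => [[|[|[|j]]] Hj] //.
  - by rewrite -z0; congr (D _ ^+ 2); apply: val_inj.
  - by rewrite -z1; congr (D _ ^+ 2); apply: val_inj.
  - by rewrite -z2; congr (D _ ^+ 2); apply: val_inj.
by move/eqP; rewrite sqrf_eq0 => /eqP.
Qed.

Lemma rot_opt (y : 'M[R]_(n, 3)) :
  (forall Q, is_rot Q -> Ex y <= Ex (rigid Q 0 y)) ->
  forall p q : 'I_3, (p, q) = (0, 1) \/ (p, q) = (1, 2) \/ (p, q) = (2, 0) ->
  \sum_i (x i q * y i p - x i p * y i q) = 0.
Proof.
move=> H p q hpq.
set A := \sum_i (x i p * y i p + x i q * y i q).
set C := \sum_i (x i q * y i p - x i p * y i q).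
have key : forall c s : R, c ^+ 2 + s ^+ 2 = 1 ->
    Ex (rigid (PR p q c s) 0 y) - Ex y = 2 * ((1 - c) * A - s * C).
  move=> c s hcs; rewrite /Ex /A /C -sumrB !mulr_sumr -sumrB mulr_sumr.
  apply: eq_bigr => i _; rewrite -sumrB.
  apply/eqP; rewrite -subr_eq0; apply/eqP.
  transitivity ((c ^+ 2 + s ^+ 2 - 1) * (y i p ^+ 2 + y i q ^+ 2)); last first.
    by rewrite hcs subrr mul0r.
  rewrite /rigid !sum3 !mxE !sum3 !mxE /prot.
  case: hpq => [[-> ->]|[[-> ->]|[-> ->]]] /=.
  1-3: ring.
have ineq : forall c s : R, c ^+ 2 + s ^+ 2 = 1 -> 0 <= (1 - c) * A - s * C.
  move=> c s hcs.
  have hr : is_rot (PR p q c s).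
    apply: PR_rot => //.
    case: hpq => [[-> ->]|[[-> ->]|[-> ->]]]; [left | right; left | right; right]. 1-3: reflexivity.
  have := H _ hr; rewrite -subr_ge0 key // pmulr_rge0 //.
exact: (@circle R A C ineq).
Qed.

Lemma lin_derive (F : R -> 'M[R]_(n, 3)) (a b : 'I_n -> R) (j1 j2 : 'I_3) :
  derivable F 0 1 -> (forall t, \sum_i (a i * F t i j1 - b i * F t i j2) = 0) ->
  \sum_i (a i * ('D_1 F 0) i j1 - b i * ('D_1 F 0) i j2) = 0.
Proof.
move=> dF h0; rewrite derive_mx //.
under eq_bigr do rewrite !mxE.
have dij := (derivable_mxP F 0 1).1 dF.
pose G i := a i \*: (fun t => F t i j1) - b i \*: (fun t => F t i j2).
have dG : forall i, derivable (G i) 0 1.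
  by move=> i; apply: derivableB; apply: derivableZ.
have e1 : \sum_i G i = cst 0.
  rewrite fct_sumE; apply/funext => t /=.
  rewrite -[RHS](h0 t); by apply: eq_bigr => i _.
transitivity (\sum_i 'D_1 (G i) 0); last by rewrite -(derive_sum dG) e1 derive_cst.
apply: eq_bigr => i _; rewrite /G deriveB ?deriveZ //; exact: derivableZ.
Qed.

Lemma cross_comp (y : 'M[R]_(n, 3)) (j1 j2 : 'I_3) :
  (forall j, \sum_i x i j = \sum_i y i j) ->
  \sum_i (x i j2 * y i j1 - x i j1 * y i j2) = 0 ->
  \sum_i ((x i j1 - centroid x 0 j1) * y i j2 - (x i j2 - centroid x 0 j2) * y i j1) = 0.
Proof.
move=> hs hr.
have cE : forall j, centroid x 0 j = n%:R^-1 * \sum_i x i j.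
  by move=> j; rewrite mxE summxE; congr (_ * _); apply: eq_bigr => i _; rewrite mxE.
rewrite !cE; set k := n%:R^-1.
set X1 := \sum_i x i j1; set X2 := \sum_i x i j2.
have e : \sum_i ((x i j1 - k * X1) * y i j2 - (x i j2 - k * X2) * y i j1) =
   \sum_i (x i j1 * y i j2 - x i j2 * y i j1) - k * X1 * \sum_i y i j2
   + k * X2 * \sum_i y i j1.
  transitivity (\sum_i ((x i j1 * y i j2 - x i j2 * y i j1 - k * X1 * y i j2)
      + k * X2 * y i j1)); first by apply: eq_bigr => i _; ring.
  by rewrite big_split sumrB /= -!mulr_sumr.
have e2 : \sum_i (x i j1 * y i j2 - x i j2 * y i j1) = 0.
  transitivity (- \sum_i (x i j2 * y i j1 - x i j1 * y i j2)); last by rewrite hr oppr0.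
  rewrite -sumrN; apply: eq_bigr => i _; ring.
by rewrite e e2 -!hs -/X1 -/X2; ring.
Qed.
End Main.

Theorem proposition1 (R : realType) (n m : nat)
    (a b : 'I_m -> 'I_n) (side : 'I_m -> {set 'I_n})
    (hab : forall k, a k != b k)
    (hside : forall k, b k \in side k /\ a k \notin side k)
    (x : 'M[R]_(n, 3)) (hnc : ~ collinear x)
    (theta : 'I_m -> R)
    (xt : R -> 'M[R]_(n, 3)) (Q : R -> 'M[R]_3) (p : R -> 'rV[R]_3)
    (hQ : forall t, is_rot (Q t))
    (hxt : forall t,
        xt t = rigid (Q t) (p t) (Btor a b side (fun k => t * theta k) x))
    (halign : forall t,
        is_RMSDAlign x (Btor a b side (fun k => t * theta k) x) (xt t))
    (h0 : xt 0 = x)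
    (hdx : derivable xt 0 1) (hdQ : derivable Q 0 1) (hdp : derivable p 0 1) :
  'D_1 (fun t => centroid (xt t)) 0 = 0 /\
  \sum_(i < n) cross (row i x - centroid x) (row i ('D_1 xt 0)) = 0.
Proof.
have hmin : forall t Q' p', is_rot Q' ->
    Ex R n x (xt t) <= Ex R n x (rigid Q' p' (xt t)).
  move=> t Q' p' hQ'; apply: rmsd_E.
  have [_ hal] := halign t.
  have -> : rigid Q' p' (xt t) =
     rigid (Q t *m Q') (p t *m Q' + p') (Btor a b side (fun k => t * theta k) x).
    by rewrite {1}(hxt t) rigid_comp.
  apply: hal; exact: is_rot_mul.
have rot1 : is_rot (1%:M : 'M[R]_3) by split; [rewrite trmx1 mulmx1 | rewrite det1].
have hcen : forall t j, \sum_i x i j = \sum_i xt t i j.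
  move=> t j; apply/eqP; rewrite -subr_eq0 -sumrB; apply/eqP.
  by apply: (@trans_opt R n x (xt t)) => p0; exact: hmin.
have hrot : forall t (p0 q0 : 'I_3),
    (p0, q0) = (0, 1) \/ (p0, q0) = (1, 2) \/ (p0, q0) = (2, 0) ->
    \sum_i (x i q0 * xt t i p0 - x i p0 * xt t i q0) = 0.
  by move=> t; apply: rot_opt => Q0 hQ0; exact: hmin.
have cen : forall t, centroid (xt t) = centroid x.
  move=> t; apply/rowP => j; rewrite !mxE !summxE; congr (_ * _).
  transitivity (\sum_i xt t i j); first by apply: eq_bigr => i _; rewrite mxE.
  by rewrite -hcen; apply: eq_bigr => i _; rewrite mxE.
split.
  have -> : (fun t => centroid (xt t)) = cst (centroid x) by apply/funext => t; exact: cen.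
  exact: derive_cst.
have [c hc] : exists c, c = centroid x by exists (centroid x).
rewrite -hc.
apply/rowP => k; rewrite summxE [RHS]mxE.
under eq_bigr do rewrite mxE.
case: k => [[|[|[|k]]] hk] //=; under eq_bigr do rewrite !mxE.
- apply: (@lin_derive R n xt (fun i => x i 1 - c 0 1)
     (fun i => x i 2 - c 0 2) 2 1 hdx) => t.
  rewrite hc; apply: (@cross_comp R n x (xt t) 1 2 (hcen t)).
  by apply: hrot; right; left.
- apply: (@lin_derive R n xt (fun i => x i 2 - c 0 2)
     (fun i => x i 0 - c 0 0) 0 2 hdx) => t.
  rewrite hc; apply: (@cross_comp R n x (xt t) 2 0 (hcen t)).
  by apply: hrot; right; right.
- apply: (@lin_derive R n xt (fun i => x i 0 - c 0 0)
     (fun i => x i 1 - c 0 1) 1 0 hdx) => t.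
  rewrite hc; apply: (@cross_comp R n x (xt t) 0 1 (hcen t)).
  by apply: hrot; left.

Qed.
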